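(* Let $p\in]1,+\infty[$. Consider the implicit scheme $\frac{\mathbf u^k-\mathbf u^{k-1}}{\tau_{k-1}}=-\Delta_p^{\mathbf K}\mathbf u^k+\mathbf f^k$, $k\in[N]$, $\mathbf u^0=\mathbf g$, with kernel $\mathbf K$, data $(\mathbf f^k)_k,\mathbf g$ and step sizes $\tau_{k-1}>0$. Assume $I_n\mathbf K$ is nonnegative, measurable, symmetric with $\sup_x\int_\Omega I_n\mathbf K(x,y)dy<\infty$; that $I_n\mathbf g\in L^{\max(p,q)}(\Omega)$ for some $q\in[1,+\infty]$ with $\sup_n\|I_n\mathbf g\|_{L^q(\Omega)}<+\infty$; and that $\bar f_n\in L^1([0,T];L^{\max(p,q)}(\Omega))$ with $\sup_n\|\bar f_n\|_{L^1([0,T];L^q(\Omega))}<+\infty$. Then $\bar u_n(\cdot,t)\in L^{\max(p,q)}(\Omega)$ for all $t\in[0,T]$ and $\sup_{t\in[0,T],n\in\mathbb N}\|\bar u_n(\cdot,t)\|_{L^q(\Omega)}<+\infty$.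
   Context: $d\ge1$, $\Omega=[0,1]^d$, hypercubic cells $\Omega^n_{\mathbf i}$ of measures $h_{\mathbf i}$, $I_n$ the piecewise-constant injector on cells (resp. products of cells). $\Psi(s)=|s|^{p-2}s$; $(\Delta_p^{\mathbf K}\mathbf u)_{\mathbf i}=-\sum_{\mathbf j}h_{\mathbf j}\mathbf K_{\mathbf i\mathbf j}\Psi(\mathbf u_{\mathbf j}-\mathbf u_{\mathbf i})$. Time partition $0=t_0<\dots<t_N=T$, $\tau_{k-1}=t_k-t_{k-1}$. With $u_n^k=I_n\mathbf u^k$, $f_n^k=I_n\mathbf f^k$: $\bar u_n(x,t)=u_n^k(x)$ and $\bar f_n(x,t)=f_n^k(x)$ for $t\in]t_{k-1},t_k]$. *)

(* Defs.v *)
From HB Require Import structures.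
From mathcomp Require Import all_boot all_order all_algebra.
From mathcomp Require Import all_classical all_reals.
From mathcomp Require Import ereal exp.

Set Implicit Arguments.
Unset Strict Implicit.
Unset Printing Implicit Defensive.

Import Order.TTheory GRing.Theory Num.Theory.
Local Open Scope ring_scope.

(* A tensor-product grid of Omega = [0,1]^d into hypercubic cells:
   along coordinate l, [0,1] is cut at 0 = gx l 0 < gx l 1 < ... < gx l (gM l) = 1.
   The cell with multi-index i is prod_l ]gx l (i l), gx l (i l).+1]. *)
Record grid (R : realType) (d : nat) := Grid {
  gM : 'I_d -> nat;
  gx : 'I_d -> nat -> R;
  gx0 : forall l, gx l 0 = 0;
  gx1 : forall l, gx l (gM l) = 1;
  gx_incr : forall l k, (k < gM l)%N -> gx l k < gx l k.+1 }.

Definition cell (R : realType) (d : nat) (G : grid R d) : finType :=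
  {dffun forall l : 'I_d, 'I_(gM G l)}.

Definition cellh (R : realType) (d : nat) (G : grid R d) (i : cell G) : R :=
  \prod_(l < d) (gx G l (i l).+1 - gx G l (i l)).

(* ||I_n v||_{L^q(Omega)} for the piecewise-constant injection of v,
   q in [1, +oo]: (sum_i h_i |v_i|^q)^(1/q), resp. max_i |v_i| (all h_i > 0). *)
Definition wnorm (R : realType) (C : finType) (h : C -> R) (q : \bar R)
    (v : C -> R) : R :=
  match q with
  | EFin r => (\sum_i h i * `|v i| `^ r) `^ r^-1
  | EPInf => \big[Num.max/0]_i `|v i|
  | ENInf => 0
  end.

Definition Psi (R : realType) (p : R) (s : R) : R := `|s| `^ (p - 2) * s.

Definition plap (R : realType) (C : finType) (h : C -> R) (p : R)
    (K : C -> C -> R) (v : C -> R) (i : C) : R :=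
  - \sum_j h j * K i j * Psi p (v j - v i).

(* time index k such that t in ]t_{k-1}, t_k] (k = 0 for t = 0 = t_0) *)
Definition tindex (R : realType) (tt : nat -> R) (N : nat) (t : R) : nat :=
  find (fun k => t <= tt k) (iota 0 N.+1).

Definition ubar (R : realType) (C : Type) (tt : nat -> R) (N : nat)
    (u : nat -> C -> R) (t : R) : C -> R :=
  u (tindex tt N t).

(* Main.v *)
Require Import Defs.
From HB Require Import structures.
From mathcomp Require Import all_boot all_order all_algebra.
From mathcomp Require Import all_classical all_reals.
From mathcomp Require Import ereal exp.
From mathcomp Require Import ring lra.

Import Order.TTheory GRing.Theory Num.Theory.
Local Open Scope ring_scope.



Section Gen.
Variable R : realType.

Lemma young1 (r a b : R) : 1 <= r -> 0 <= a -> 0 <= b ->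
  a * b `^ (r - 1) <= a `^ r / r + (1 - r^-1) * b `^ r.
Proof.
move=> r1 a0 b0.
have [->|rn1] := eqVneq r 1.
  by rewrite subrr powRr0 powRr1 // invr1 !mulr1 subrr mul0r addr0.
have r1' : 1 < r by rewrite lt_neqAle eq_sym rn1.
have r0 : 0 < r by apply: lt_trans r1'.
have rm0 : 0 < r - 1 by rewrite subr_gt0.
have := @conjugate_powR R a (b `^ (r - 1)) r (r / (r - 1)) a0 (powR_ge0 _ _) r0
  (divr_gt0 r0 rm0).
rewrite -powRrM mulrCA mulfV ?gt_eqF // mulr1 invf_div.
have -> : (r - 1) / r = 1 - r^-1 by rewrite mulrBl mulfV ?gt_eqF // mul1r.
rewrite [_ * (1 - _)]mulrC; apply.
by rewrite addrC subrK.
Qed.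

Definition phi (r s : R) := Num.sg s * `|s| `^ (r - 1).

Lemma phi_mono (r a b : R) : 1 <= r -> a <= b -> phi r a <= phi r b.
Proof.
move=> r1 ab; have r10 : 0 <= r - 1 by rewrite subr_ge0.
rewrite /phi.
have [a0|a0|a0] := ltgtP a 0.
- rewrite ltr0_sg // mulN1r.
  have [b0|b0|->] := ltgtP b 0.
  + rewrite ltr0_sg // mulN1r lerN2 ge0_ler_powR // ?nnegrE //.
    by rewrite !ltr0_norm // lerN2.
  + rewrite gtr0_sg // mul1r; apply: (@le_trans _ _ 0); last exact: powR_ge0.
    by rewrite oppr_le0 powR_ge0.
  + by rewrite sgr0 mul0r oppr_le0 powR_ge0.
- have b0 : 0 < b by apply: lt_le_trans ab.
  rewrite !gtr0_sg // !mul1r ge0_ler_powR // ?nnegrE //.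
  by rewrite !gtr0_norm.
- rewrite a0 in ab *; rewrite sgr0 mul0r.
  have [->|b0] := eqVneq b 0; first by rewrite sgr0 mul0r.
  by rewrite gtr0_sg ?mul1r ?powR_ge0 // lt_neqAle eq_sym b0 ab.
Qed.

Lemma phi_mul (r s : R) : 1 <= r -> s * phi r s = `|s| `^ r.
Proof.
move=> r1; rewrite /phi mulrA [s * _]mulrC -normrEsg mulr_powRB1 //.
by apply: lt_le_trans r1.
Qed.

Lemma phi_norm (r s : R) : `|phi r s| <= `|s| `^ (r - 1).
Proof.
rewrite /phi normrM norm_powR // normr_id.
have [->|s0] := eqVneq s 0; first by rewrite sgr0 normr0 mul0r powR_ge0.
by rewrite normr_sg s0 mul1r.
Qed.


Lemma aux_field (a b A c : R) : A != 0 -> c != 0 -> a * b = A * c * ((a / A) * (b / c)).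
Proof. by move=> ? ?; field; apply/andP. Qed.

Lemma divpowR (s c e : R) : 0 <= s -> 0 < c -> (s / c) `^ e = s `^ e / c `^ e.
Proof.
move=> s0 c0; rewrite powRM //; last by rewrite invr_ge0 ltW.
by rewrite -(powR_inv1 (ltW c0)) powRAC powR_inv1 // powR_ge0.
Qed.

Variable C : finType.
Variable h : C -> R.
Hypothesis hpos : forall i, 0 < h i.

Definition Sn (r : R) (v : C -> R) := \sum_i h i * `|v i| `^ r.

Lemma Sn_ge0 r v : 0 <= Sn r v.
Proof. by apply: sumr_ge0 => i _; rewrite mulr_ge0 ?powR_ge0 ?ltW. Qed.

Lemma Sn_eq0 r v : 0 < r -> Sn r v = 0 -> forall i, v i = 0.
Proof.
move=> r0 H i.
have H0 : forall k, true -> 0 <= h k * `|v k| `^ r.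
  by move=> k _; rewrite mulr_ge0 ?powR_ge0 ?ltW.
have /eqP := @psumr_eq0P _ _ _ _ H0 H i isT.
rewrite mulf_eq0 gt_eqF //= => /eqP /powR_eq0_eq0.
by move/eqP; rewrite normr_eq0 => /eqP.
Qed.

Lemma powRK (s r : R) : 0 <= s -> 0 < r -> (s `^ r^-1) `^ r = s.
Proof. by move=> s0 r0; rewrite -powRrM mulVf ?gt_eqF // powRr1. Qed.

Lemma hoelder_fin (r : R) (x w : C -> R) : 1 <= r ->
  \sum_i h i * (`|x i| * `|w i| `^ (r - 1))
    <= Sn r x `^ r^-1 * (Sn r w `^ r^-1) `^ (r - 1).
Proof.
move=> r1; have r0 : 0 < r by apply: lt_le_trans r1.
have [->|rn1] := eqVneq r 1.
  rewrite subrr powRr0 invr1 mulr1 powRr1 ?Sn_ge0 // /Sn.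
  under eq_bigr do rewrite powRr0 mulr1.
  by under [X in _ <= X]eq_bigr do rewrite powRr1 //.
have r1' : 1 < r by rewrite lt_neqAle eq_sym rn1.
have rm0 : r - 1 != 0 by rewrite subr_eq0 gt_eqF.
set A := Sn r x `^ r^-1; set B := Sn r w `^ r^-1.
have A0 : 0 <= A by apply: powR_ge0.
have B0 : 0 <= B by apply: powR_ge0.
have RHS0 : 0 <= A * B `^ (r - 1) by rewrite mulr_ge0 ?powR_ge0.
have [Ae|Ap] := eqVneq A 0.
  have Sx0 : Sn r x = 0 by move: Ae; apply: powR_eq0_eq0.
  have := Sn_eq0 _ _ r0 Sx0 => xz.
  rewrite big1 // => i _; by rewrite xz normr0 !mul0r mulr0.
have [Be|Bp] := eqVneq B 0.
  have Sw0 : Sn r w = 0 by move: Be; apply: powR_eq0_eq0.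
  have := Sn_eq0 _ _ r0 Sw0 => wz.
  rewrite big1 // => i _; by rewrite wz normr0 powR0 // !mulr0.
have Ap' : 0 < A by rewrite lt_neqAle eq_sym Ap A0.
have Bp' : 0 < B by rewrite lt_neqAle eq_sym Bp B0.
have SxA : A `^ r = Sn r x by rewrite powRK ?Sn_ge0.
have SwB : B `^ r = Sn r w by rewrite powRK ?Sn_ge0.
have Sxp : 0 < Sn r x by rewrite -SxA powR_gt0.
have Swp : 0 < Sn r w by rewrite -SwB powR_gt0.
have Bq : 0 < B `^ (r - 1) by rewrite powR_gt0.
clearbody A B.
apply: (@le_trans _ _ (\sum_i h i * (A * B `^ (r - 1) *
   (`|x i| `^ r / Sn r x / r + (1 - r^-1) * (`|w i| `^ r / Sn r w))))).
  apply: ler_sum => i _; rewrite ler_pM2l //.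
  have -> : `|x i| * `|w i| `^ (r - 1) =
     A * B `^ (r - 1) * ((`|x i| / A) * (`|w i| / B) `^ (r - 1)).
    rewrite (divpowR _ _ _ (normr_ge0 _) Bp').
    have An : A != 0 by exact: lt0r_neq0 Ap'.
    have Bn : B `^ (r - 1) != 0 by exact: lt0r_neq0 Bq.
    rewrite mulrACA [A * _]mulrC [B `^ (r - 1) * _]mulrC.
    rewrite (divfK An) (divfK Bn).
    by [].
  have ABp : 0 < A * B `^ (r - 1) := mulr_gt0 Ap' Bq.
  rewrite (ler_pM2l ABp).
  have xa : 0 <= `|x i| / A := divr_ge0 (normr_ge0 _) A0.
  have wb : 0 <= `|w i| / B := divr_ge0 (normr_ge0 _) B0.
  apply: (le_trans (young1 _ _ _ r1 xa wb)).
  rewrite (divpowR `|x i| A r (normr_ge0 _) Ap') (divpowR `|w i| B r (normr_ge0 _) Bp').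
  by rewrite SxA SwB.
have -> : \sum_i h i * (A * B `^ (r - 1) *
   (`|x i| `^ r / Sn r x / r + (1 - r^-1) * (`|w i| `^ r / Sn r w))) =
   A * B `^ (r - 1) * ((Sn r x) / Sn r x / r + (1 - r^-1) * (Sn r w / Sn r w)).
  rewrite /Sn [RHS]mulrDr !mulr_suml !mulr_sumr -big_split /=.
  by apply: eq_bigr => i _; ring.
rewrite !mulfV ?gt_eqF // mul1r mulr1 subrKC mulr1 //.
Qed.

Lemma Psi_odd (p s : R) : Psi p (- s) = - Psi p s.
Proof. by rewrite /Psi normrN mulrN. Qed.

Lemma mono2 (r a b : R) : 1 <= r -> (b - a) * (phi r a - phi r b) <= 0.
Proof.
move=> r1; have [ab|ba] := leP a b.
  by rewrite mulr_ge0_le0 // ?subr_ge0 ?subr_le0 ?phi_mono.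
by rewrite mulr_le0_ge0 // ?subr_ge0 ?subr_le0 ?phi_mono // ltW.
Qed.

Lemma accr (p r : R) (K : C -> C -> R) (w : C -> R) : 1 <= r ->
  (forall i j, 0 <= K i j) -> (forall i j, K i j = K j i) ->
  0 <= \sum_i h i * plap h p K w i * phi r (w i).
Proof.
move=> r1 K0 Ks.
pose F i j := h i * (h j * K i j * Psi p (w j - w i)) * phi r (w i).
have -> : \sum_i h i * plap h p K w i * phi r (w i) = - \sum_i \sum_j F i j.
  rewrite -sumrN; apply: eq_bigr => i _.
  by rewrite /plap mulrN mulNr mulr_sumr mulr_suml -sumrN.
rewrite oppr_ge0.
have E : \sum_i \sum_j F i j = \sum_i \sum_j F j i by rewrite exchange_big.
suff : \sum_i \sum_j F i j + \sum_i \sum_j F i j <= 0.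
  by rewrite -mulr2n -mulr_natr pmulr_lle0.
rewrite {2}E -big_split /=; apply: sumr_le0 => i _.
rewrite -big_split /=; apply: sumr_le0 => j _.
have -> : F i j + F j i = h i * h j * K i j * `|w j - w i| `^ (p - 2) *
   ((w j - w i) * (phi r (w i) - phi r (w j))).
  rewrite /F Ks -opprB Psi_odd /Psi normrN Ks; ring.
apply: mulr_ge0_le0; last exact: mono2.
apply: mulr_ge0; last exact: powR_ge0.
apply: mulr_ge0; last exact: K0.
by apply: mulr_ge0; apply: ltW.
Qed.

End Gen.



Section Step.
Variable R : realType.
Variable C : finType.
Variable h : C -> R.
Hypothesis hpos : forall i, 0 < h i.
Variables (p : R) (K : C -> C -> R).
Hypothesis K0 : forall i j, 0 <= K i j.
Hypothesis Ks : forall i j, K i j = K j i.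
Local Notation SS := (@Sn R C h).
Local Notation ph := (@phi R).

Lemma step_fin (r tau : R) (w u0 f : C -> R) : 1 <= r -> 0 < tau ->
  (forall i, (w i - u0 i) / tau = - plap h p K w i + f i) ->
  wnorm h r%:E w <= wnorm h r%:E u0 + tau * wnorm h r%:E f.
Proof.
move=> r1 t0 sch; rewrite /=.
have r0 : 0 < r by apply: lt_le_trans r1.
have ey : forall i, w i + tau * plap h p K w i = u0 i + tau * f i.
  move=> i; have := sch i; move/(congr1 (fun z => z * tau)).
  rewrite divfK ?gt_eqF // => E.
  by rewrite -[w i](subrK (u0 i)) E; ring.
set B := SS r w `^ r^-1.
set A0 := SS r u0 `^ r^-1.
set Af := SS r f `^ r^-1.
have B0 : 0 <= B by apply: powR_ge0.
have RHS0 : 0 <= A0 + tau * Af by rewrite addr_ge0 ?mulr_ge0 ?powR_ge0 ?ltW.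
have key : B `^ r <= (A0 + tau * Af) * B `^ (r - 1).
  rewrite powRK //; last exact: Sn_ge0.
  have e1 : SS r w = \sum_i h i * (w i * ph r (w i)).
    by apply: eq_bigr => i _; rewrite (@phi_mul R r (w i) r1).
  rewrite e1.
  apply: (@le_trans _ _ (\sum_i h i * ((u0 i + tau * f i) * ph r (w i)))).
    rewrite -(subr_ge0) -sumrB.
    have := @accr R C h hpos p r K w r1 K0 Ks.
    move/(mulr_ge0 (ltW t0)); rewrite mulr_sumr.
    move/le_trans; apply; rewrite le_eqVlt; apply/orP; left; apply/eqP.
    apply: eq_bigr => i _; rewrite -ey; ring.
  apply: (@le_trans _ _ (\sum_i h i * (`|u0 i| * `|w i| `^ (r - 1))
        + tau * \sum_i h i * (`|f i| * `|w i| `^ (r - 1)))).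
    rewrite mulr_sumr -big_split /=; apply: ler_sum => i _.
    have -> : h i * (`|u0 i| * `|w i| `^ (r - 1)) +
       tau * (h i * (`|f i| * `|w i| `^ (r - 1))) =
       h i * ((`|u0 i| + tau * `|f i|) * `|w i| `^ (r - 1)) by ring.
    rewrite ler_pM2l //; apply: (le_trans (ler_norm _)).
    rewrite normrM; apply: ler_pM; rewrite ?normr_ge0 ?phi_norm //.
    by rewrite (le_trans (ler_normD _ _)) // normrM (gtr0_norm t0).
  rewrite mulrDl; apply: lerD; first exact: hoelder_fin.
  rewrite -mulrA ler_pM2l //; exact: hoelder_fin.
have [Be|Bp] := eqVneq B 0; first by rewrite Be.
have Bp' : 0 < B by rewrite lt_neqAle eq_sym Bp B0.
move: key; rewrite -(mulr_powRB1 B0 r0) ler_pM2r //; exact: powR_gt0.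
Qed.

End Step.



Section Inf.
Variable R : realType.
Variable C : finType.
Variable h : C -> R.
Hypothesis hpos : forall i, 0 < h i.
Variables (p : R) (K : C -> C -> R).
Hypothesis K0 : forall i j, 0 <= K i j.

Definition Mx (v : C -> R) := \big[Num.max/0]_i `|v i|.

Lemma Mx_ge0 v : 0 <= Mx v.
Proof.
rewrite /Mx; elim/big_ind: _ => // x y hx hy.
by rewrite le_max hx.
Qed.

Lemma Mx_le v i : `|v i| <= Mx v.
Proof. exact: le_bigmax. Qed.

Lemma Mx_ub v c : 0 <= c -> (forall i, `|v i| <= c) -> Mx v <= c.
Proof. by move=> c0 H; apply: bigmax_le. Qed.

Lemma step_inf (tau : R) (w u0 f : C -> R) : 0 < tau ->
  (forall i, (w i - u0 i) / tau = - plap h p K w i + f i) ->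
  wnorm h +oo%E w <= wnorm h +oo%E u0 + tau * wnorm h +oo%E f.
Proof.
move=> t0 sch; rewrite /=.
have ey : forall i, w i + tau * plap h p K w i = u0 i + tau * f i.
  move=> i; have := sch i; move/(congr1 (fun z => z * tau)).
  rewrite divfK ?gt_eqF // => E.
  by rewrite -[w i](subrK (u0 i)) E; ring.
pose y i := w i + tau * plap h p K w i.
have RHS0 : 0 <= Mx u0 + tau * Mx f by rewrite addr_ge0 ?mulr_ge0 ?Mx_ge0 ?ltW.
apply: (@le_trans _ _ (Mx y)).
  apply: Mx_ub; first exact: Mx_ge0.
  move=> i.
  case: (@arg_maxP _ _ C i xpredT (fun k => `|w k|) isT) => j _ Hj.
  apply: (le_trans (Hj i isT)); apply: (le_trans _ (Mx_le y j)).
  have [wj0|wj0] := leP 0 (w j).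
    have pl0 : 0 <= plap h p K w j.
      rewrite /plap oppr_ge0; apply: sumr_le0 => k _.
      rewrite /Psi mulrA; apply: mulr_ge0_le0.
        by rewrite mulr_ge0 ?powR_ge0 // mulr_ge0 // ltW.
      rewrite subr_le0; apply: (le_trans (ler_norm _)).
      by have := Hj k isT; rewrite /= (ger0_norm wj0).
    rewrite (ger0_norm wj0) /y; apply: (le_trans _ (ler_norm _)).
    by rewrite lerDl mulr_ge0 // ltW.
  have pl0 : plap h p K w j <= 0.
    rewrite /plap oppr_le0; apply: sumr_ge0 => k _.
    rewrite /Psi mulrA; apply: mulr_ge0.
      by rewrite mulr_ge0 ?powR_ge0 // mulr_ge0 // ltW.
    rewrite subr_ge0.
    have := Hj k isT; rewrite /= (ltr0_norm wj0) => H.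
    by rewrite -lerN2; apply: (le_trans _ H); rewrite -normrN ler_norm.
  rewrite (ltr0_norm wj0) /y ler_normr.
  apply/orP; right; rewrite lerN2 gerDl.
  by rewrite mulr_ge0_le0 // ltW.
apply: Mx_ub => // i; rewrite /y ey.
apply: (le_trans (ler_normD _ _)); apply: lerD; first exact: Mx_le.
by rewrite normrM (gtr0_norm t0) ler_pM2l // Mx_le.
Qed.

End Inf.



Lemma cellh_gt0 (R : realType) (d : nat) (G : grid R d) (i : cell G) : 0 < cellh i.
Proof.
rewrite /cellh; apply: prodr_gt0 => l _; rewrite subr_gt0; apply: gx_incr.
exact: ltn_ord.
Qed.

Theorem lemma6p13 (R : realType) (d : nat) (hd : (0 < d)%N)
  (p : R) (hp : 1 < p) (q : \bar R) (hq : (1%:E <= q)%E)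
  (T : R) (G : nat -> grid R d)
  (N : nat -> nat) (tt : nat -> nat -> R)
  (ht0 : forall n, tt n 0%N = 0)
  (htN : forall n, tt n (N n) = T)
  (htinc : forall n k, (k < N n)%N -> tt n k < tt n k.+1)
  (K : forall n, cell (G n) -> cell (G n) -> R)
  (f : forall n, nat -> cell (G n) -> R)
  (g : forall n, cell (G n) -> R)
  (u : forall n, nat -> cell (G n) -> R)
  (hK0 : forall n i j, 0 <= K n i j)
  (hKs : forall n i j, K n i j = K n j i)
  (hKb : forall n, exists M, forall i, \sum_j cellh j * K n i j <= M)
  (hg : exists C, forall n, wnorm (@cellh R d (G n)) q (g n) <= C)
  (hf : exists C, forall n,
      \sum_(1 <= k < (N n).+1) (tt n k - tt n k.-1)
          * wnorm (@cellh R d (G n)) q (f n k) <= C)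
  (hu0 : forall n i, u n 0%N i = g n i)
  (hscheme : forall n k, (1 <= k <= N n)%N -> forall i,
      (u n k i - u n k.-1 i) / (tt n k - tt n k.-1)
        = - plap (@cellh R d (G n)) p (K n) (u n k) i + f n k i) :
  exists C, forall n t, 0 <= t <= T ->
    wnorm (@cellh R d (G n)) q (ubar (tt n) (N n) (u n) t) <= C.
Proof.
case: hg => Cg hg; case: hf => Cf hf.
have STEP : forall n tau (w u0 ff : cell (G n) -> R), 0 < tau ->
    (forall i, (w i - u0 i) / tau = - plap (@cellh R d (G n)) p (K n) w i + ff i) ->
    wnorm (@cellh R d (G n)) q w <=
      wnorm (@cellh R d (G n)) q u0 + tau * wnorm (@cellh R d (G n)) q ff.
  move=> n tau w u0 ff t0 sch.
  move: hg hf; case: q hq => [r| |] hq' _ _.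
  - apply: (@step_fin R _ _ (@cellh_gt0 R d (G n)) p (K n) (hK0 n) (hKs n)) => //.
  - exact: (@step_inf R _ _ (@cellh_gt0 R d (G n)) p (K n) (hK0 n)).
  - by move: hq'; rewrite leeNy_eq.
have NN : forall n (v : cell (G n) -> R), 0 <= wnorm (@cellh R d (G n)) q v.
  move=> n v; move: hq STEP hg hf; case: q => [r| |] /= _ _ _ _.
  - exact: powR_ge0.
  - exact: Mx_ge0.
  - exact: lexx.
exists (Cg + Cf) => n t /andP[t0 tT].
set nrm := wnorm (@cellh R d (G n)) q.
pose F k := (tt n k - tt n k.-1) * nrm (f n k).
have Fge0 : forall k, (1 <= k <= N n)%N -> 0 <= F k.
  move=> k /andP[k1 kN]; rewrite /F mulr_ge0 ?NN // subr_ge0.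
  have H := htinc n k.-1; rewrite prednK // in H; apply: ltW; apply: H.
  by rewrite (leq_trans _ kN) // ltn_predL.
have IND : forall k, (k <= N n)%N -> nrm (u n k) <= nrm (g n) + \sum_(1 <= j < k.+1) F j.
  elim=> [|k IH] kN.
    have -> : u n 0%N = g n by apply: funext => i; exact: hu0.
    by rewrite big_geq // addr0.
  rewrite big_nat_recr //= addrA.
  have T0 : 0 < tt n k.+1 - tt n k.+1.-1 by rewrite subr_gt0; apply: htinc.
  have kk : (1 <= k.+1 <= N n)%N by rewrite kN.
  apply: (le_trans (STEP n _ _ _ _ T0 (hscheme n k.+1 kk))).
  by rewrite lerD2r IH // ltnW.
have PART : forall k, (k <= N n)%N -> \sum_(1 <= j < k.+1) F j <= Cf.
  move=> k kN; apply: le_trans (hf n).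
  rewrite [X in _ <= X](big_cat_nat (n := k.+1)) //=.
  rewrite lerDl big_nat_cond; apply: sumr_ge0 => j /andP[/andP[j1 j2] _].
  by apply: Fge0; apply/andP; split; [exact: leq_trans _ j1 | rewrite -ltnS].
have TI : (tindex (tt n) (N n) t <= N n)%N.
  rewrite /tindex -ltnS -[X in (_ < X)%N](size_iota 0 (N n).+1) -has_find.
  apply/hasP; exists (N n); first by rewrite mem_iota add0n ltnSn.
  by rewrite htN.
rewrite /ubar; apply: (le_trans (IND _ TI)); apply: lerD; first exact: hg.
exact: PART.
Qed.
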